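(* Let $N,S,k$ be positive integers and let $e_n(s)$ ($1\le n\le N$, $1\le s\le S$) be chosen independently and uniformly from $\{-1,+1\}$; put $G_{N,S}(s)=(e_1(s),\dots,e_N(s))$. For every $\theta\ge0$, \[ \mathbb{P}\left[\left|\Phi_k(G_{N,S})-\mathbb{E}[\Phi_k(G_{N,S})]\right|\ge\theta\right]\le 2\exp\left\{-\frac{\theta^2}{2k^2N}\right\}. \]
   Context: For a map $G_{N,S}:\{1,\dots,S\}\to\{-1,+1\}^N$, $G_{N,S}(s)=(e_1(s),\dots,e_N(s))$, the cross-correlation measure of order $k$ is \[ \Phi_k(G_{N,S})=\max\left|\sum_{n=1}^M e_{n+d_1}(s_1)\cdots e_{n+d_k}(s_k)\right|, \] the maximum taken over all integers $M,d_1,\dots,d_k$ and $1\le s_1,\dots,s_k\le S$ with $0\le d_1\le\dots\le d_k<M+d_k\le N$ and $d_i\ne d_j$ whenever $s_i=s_j$. *)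

(* Defs.v *)
From HB Require Import structures.
From mathcomp Require Import all_boot all_order all_algebra.
From mathcomp Require Import reals sequences exp.
Set Implicit Arguments. Unset Strict Implicit. Unset Printing Implicit Defensive.
Import Order.TTheory GRing.Theory Num.Theory.
Local Open Scope ring_scope.

(* A sample point: e (s, n) for s : 'I_S, n : 'I_N; true <-> +1, false <-> -1.
   (0-based indices: e (s, n) stands for e_{n+1}(s+1).) *)
Definition config (N S : nat) := {ffun 'I_S * 'I_N -> bool}.

Definition sgn (b : bool) : int := if b then 1 else -1.

(* value of e_{m+1}(s+1) for a natural index m (0 outside the range,
   never used for admissible parameters) *)
Definition ev (N S : nat) (e : config N S) (s : 'I_S) (m : nat) : int :=
  match @insub nat (fun x => x < N)%N 'I_N m with
  | Some i => sgn (e (s, i))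
  | None => 0
  end.

Definition admissible (N S k : nat) (M : 'I_N.+1) (d : {ffun 'I_k -> 'I_N})
  (s : {ffun 'I_k -> 'I_S}) : bool :=
  [&& (0 < M)%N,
      [forall i : 'I_k, forall j : 'I_k, (i <= j)%N ==> (d i <= d j)%N],
      [forall i : 'I_k, (d i + M <= N)%N] &
      [forall i : 'I_k, forall j : 'I_k, (i != j) && (s i == s j) ==> (d i != d j)]].

Definition corr (N S k : nat) (e : config N S) (M : 'I_N.+1)
  (d : {ffun 'I_k -> 'I_N}) (s : {ffun 'I_k -> 'I_S}) : int :=
  \sum_(n < M) \prod_(i < k) ev e (s i) (n + d i).

(* cross-correlation measure of order k (max over empty set := 0) *)
Definition Phi (N S k : nat) (e : config N S) : nat :=
  \max_(p : 'I_N.+1 * {ffun 'I_k -> 'I_N} * {ffun 'I_k -> 'I_S}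
          | admissible p.1.1 p.1.2 p.2)
     `|corr e p.1.1 p.1.2 p.2|%N.

Definition Prob (R : realType) (N S : nat) (A : config N S -> bool) : R :=
  #|[set e : config N S | A e]|%:R / #|{: config N S}|%:R.

Definition Expect (R : realType) (N S : nat) (X : config N S -> R) : R :=
  (\sum_(e : config N S) X e) / #|{: config N S}|%:R.

(* Main.v *)
Require Import Defs.
From HB Require Import structures.
From mathcomp Require Import all_boot all_order all_algebra.
From mathcomp Require Import reals sequences exp.
From mathcomp Require Import boolp classical_sets functions topology normedtype derive realfun.
From mathcomp Require Import ring lra zify.
Import Order.TTheory GRing.Theory Num.Theory.
Import numFieldNormedType.Exports.
Local Open Scope ring_scope.

Section Core.
Variable R : realType.

Lemma mvt_nonneg (f df : R -> R) (a b : R) : a <= b ->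
  (forall x : R, is_derive x (1:R) f (df x)) ->
  (forall x, a < x -> x < b -> 0 <= df x) -> f a <= f b.
Proof.
move=> ab fd dpos; case: (ltgtP a b) ab => // [altb _|-> _]; last by [].
have [|c cab E] := MVT altb (fun x _ => fd x).
  apply/continuous_subspaceT=> x.
  exact/differentiable_continuous/derivable1_diffP/(@ex_derive _ _ _ _ _ _ _ (fd x)).
rewrite -subr_ge0 E mulr_ge0 ?subr_ge0 ?(ltW altb) //.
by apply: dpos; move: cab; rewrite in_itv /= => /andP[].
Qed.


Arguments mvt_nonneg {f df a b}.

Lemma hoeff_core (p h : R) : 0 <= p <= 1 ->
  (1 - p) * expR (- (p * h)) + p * expR ((1 - p) * h) <= expR (h ^+ 2 / 8).
Proof.
move=> /andP[p0 p1].
pose u := fun x : R => 1 - p + p * expR x.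
have upos x : 0 < u x.
  rewrite /u; case: (ltgtP p 1) p1 => // [plt1 _|-> _].
    by rewrite ltr_wpDr ?mulr_ge0 ?expR_ge0 // subr_gt0.
  by rewrite subrr add0r mul1r expR_gt0.
have un0 x : u x != 0 by rewrite gt_eqF.
have du x : is_derive x (1:R) u (p * expR x).
  have h1 : is_derive x (1:R) (cst (1 - p) + p \*: expR) (0 + p *: expR x).
    exact: is_deriveD.
  by rewrite add0r in h1; exact: h1.
pose r := fun x : R => x / 4 + (p - 1) + (1 - p) * (u x)^-1.
have dr x : is_derive x (1:R) r (1/4 + (1 - p) * (- (u x) ^- 2 * (p * expR x))).
  have h2 : is_derive x (1:R) (fun y => (u y)^-1) (- (u x) ^- 2 *: (p * expR x)).
    exact: is_deriveV.
  have h1 : is_derive x (1:R) ((4^-1) \*: id + cst (p - 1) + (1 - p) \*: (fun y => (u y)^-1))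
     (4^-1 *: 1 + 0 + (1 - p) *: (- (u x) ^- 2 *: (p * expR x))).
    by apply: is_deriveD; apply: is_deriveD.
  have -> : r = ((4^-1) \*: id + cst (p - 1) + (1 - p) \*: (fun y => (u y)^-1)).
    by apply/funext => y /=; rewrite /r mulrC.
  apply: (is_derive_eq h1).
  by rewrite addr0 div1r; congr (_ + _); apply: mulr1.
pose psi := fun x : R => x ^+ 2 / 8 + p * x - ln (u x).
have dpsi x : is_derive x (1:R) psi (r x).
  have hl : is_derive (u x) (1:R) (@ln R) (u x)^-1 by exact: is_derive1_ln.
  have h3 : is_derive x (1:R) (@ln R \o u) ((u x)^-1 * (p * expR x)).
    exact: is_derive1_comp.
  have h1 : is_derive x (1:R) ((8^-1) \*: (id ^+ 2) + p \*: id - (@ln R \o u))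
     (8^-1 *: ((2%:R * x ^+ 1) *: 1) + p *: 1 - (u x)^-1 * (p * expR x)).
    by apply: is_deriveB; apply: is_deriveD.
  have -> : psi = ((8^-1) \*: (id ^+ 2) + p \*: id - (@ln R \o u)).
    by apply/funext => y /=; rewrite /psi mulrC.
  apply: (is_derive_eq h1).
  change (8^-1 * ((2 * x ^+ 1) * 1) + p * 1 - (u x)^-1 * (p * expR x) = r x).
  have := un0 x; rewrite /r /u => ?; field => //.
have r'ge x : 0 <= 1/4 + (1 - p) * (- (u x) ^- 2 * (p * expR x)).
  have U0 := upos x; have E0 := expR_ge0 x.
  have -> : 1/4 + (1 - p) * (- (u x) ^- 2 * (p * expR x)) =
     ((u x)^+2 - 4 * ((1 - p) * (p * expR x))) / (4 * (u x)^+2).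
    by field; rewrite gt_eqF.
  apply: divr_ge0; last by rewrite mulr_ge0 // exprn_ge0 // ltW.
  rewrite /u; have := sqr_ge0 (1 - p - p * expR x); nra.
have u0 : u 0 = 1 by rewrite /u /= expR0 mulr1; ring.
have r0 : r 0 = 0 by rewrite /r /= u0 invr1 mulr1 mul0r add0r; ring.
have rpos x : 0 <= x -> 0 <= r x.
  by move=> x0; rewrite -r0; apply: (mvt_nonneg x0 dr) => y _ _.
have rneg x : x <= 0 -> r x <= 0.
  by move=> x0; rewrite -r0; apply: (mvt_nonneg x0 dr) => y _ _.
have psi0 : psi 0 = 0 by rewrite /psi /= u0 ln1; ring.
have psipos : 0 <= psi h.
  case: (lerP 0 h) => h0.
    rewrite -psi0; apply: (mvt_nonneg h0 dpsi) => y y0 _.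
    by apply: rpos; rewrite ltW.
  have dn x : is_derive x (1:R) (fun y => - psi y) (- r x) by exact: is_deriveN.
  have := mvt_nonneg (ltW h0) dn.
  rewrite /= psi0 oppr0 oppr_le0; apply => y _ y0.
  by rewrite oppr_ge0; apply: rneg; rewrite ltW.
have lnle : ln (u h) <= h ^+ 2 / 8 + p * h by move: psipos; rewrite /psi subr_ge0.
have uh : u h <= expR (h ^+ 2 / 8 + p * h).
  by rewrite -(lnK (upos h)) ler_expR.
have -> : (1 - p) * expR (- (p * h)) + p * expR ((1 - p) * h) = expR (- (p * h)) * u h.
  have -> : (1 - p) * h = - (p * h) + h by ring.
  by rewrite expRD /u; ring.
have -> : expR (h ^+ 2 / 8) = expR (- (p * h)) * expR (h ^+ 2 / 8 + p * h).
  by rewrite -expRD; congr expR; ring.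
by rewrite ler_pM2l ?expR_gt0.
Qed.

Lemma expR_convex (l a b x : R) : a <= x -> x <= b ->
  expR (l * x) * (b - a) <= (b - x) * expR (l * a) + (x - a) * expR (l * b).
Proof.
move=> ax xb.
have ea : expR (l * x) * (1 + l * (a - x)) <= expR (l * a).
  have -> : l * a = l * x + l * (a - x) by ring.
  by rewrite expRD ler_pM2l ?expR_gt0 // expR_ge1Dx.
have eb : expR (l * x) * (1 + l * (b - x)) <= expR (l * b).
  have -> : l * b = l * x + l * (b - x) by ring.
  by rewrite expRD ler_pM2l ?expR_gt0 // expR_ge1Dx.
have h1 := ler_wpM2l (x := b - x) (ltac:(by rewrite subr_ge0)) ea.
have h2 := ler_wpM2l (x := x - a) (ltac:(by rewrite subr_ge0)) eb.
have -> : expR (l * x) * (b - a) = (b - x) * (expR (l * x) * (1 + l * (a - x))) +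
   (x - a) * (expR (l * x) * (1 + l * (b - x))) by ring.
exact: lerD.
Qed.

Lemma sum_cst (T : finType) (x : R) : \sum_(t : T) x = x * #|T|%:R.
Proof. by rewrite sumr_const -[x *+ _]mulr_natr. Qed.

Lemma hoeff_fin (T : finType) (X : T -> R) (a c l : R) : 0 < c ->
  (forall t, a <= X t <= a + c) -> \sum_t X t = 0 ->
  \sum_t expR (l * X t) <= #|T|%:R * expR (l ^+ 2 * c ^+ 2 / 8).
Proof.
move=> c0 Xab X0.
case: (posnP #|T|) => [T0|Tpos].
  rewrite T0 mul0r big_pred0 // => t; apply/negP => _.
  by move: T0 => /card0_eq /(_ t); rewrite inE.
have Tp : 0 < #|T|%:R :> R by rewrite ltr0n.
have a0 : a <= 0.
  have : \sum_(t : T) a <= \sum_t X t by apply: ler_sum => t _; case/andP: (Xab t).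
  by rewrite X0 sum_cst pmulr_lle0.
have ac0 : 0 <= a + c.
  have : \sum_t X t <= \sum_(t : T) (a + c) by apply: ler_sum => t _; case/andP: (Xab t).
  by rewrite X0 sum_cst pmulr_lge0.
have key : \sum_t expR (l * X t) * c <=
    #|T|%:R * ((a + c) * expR (l * a) - a * expR (l * (a + c))).
  apply: (le_trans (y := \sum_t ((a + c - X t) * expR (l * a) + (X t - a) * expR (l * (a + c))))).
    apply: ler_sum => t _; case/andP: (Xab t) => h1 h2.
    by have := @expR_convex l _ _ _ h1 h2; rewrite [a + c - a]addrC addKr.
  rewrite big_split /= -!(big_distrl) /= !sumrB X0 !sum_cst; lra.
rewrite -mulr_suml in key.
have {}key : \sum_t expR (l * X t) <=
    #|T|%:R * ((1 - (- a / c)) * expR (- ((- a / c) * (l * c))) +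
               (- a / c) * expR ((1 - (- a / c)) * (l * c))).
  have cn0 : c != 0 by rewrite gt_eqF.
  have -> : - (- a / c * (l * c)) = l * a by field.
  have -> : (1 - - a / c) * (l * c) = l * (a + c) by field.
  have -> : (1 - - a / c) * expR (l * a) + - a / c * expR (l * (a + c)) =
     ((a + c) * expR (l * a) - a * expR (l * (a + c))) / c by field.
  by rewrite mulrA ler_pdivlMr.
apply: (le_trans key); rewrite ler_pM2l ?ltr0n //.
have -> : l ^+ 2 * c ^+ 2 / 8 = (l * c) ^+ 2 / 8 by rewrite exprMn.
apply: hoeff_core.
rewrite divr_ge0 ?oppr_ge0 ?(ltW c0) //=.
by rewrite ler_pdivrMr // mul1r; lra.
Qed.

End Core.

Section Mcd.
Variable R : realType.
Variables N S : nat.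
Local Notation Om := (config N S).

Definition merge (j : nat) (e r : Om) : Om := [ffun x : 'I_S * 'I_N => if (x.2 < j)%N then e x else r x].

Lemma merge_invol j e r : merge j (merge j e r) (merge j r e) = e.
Proof. by apply/ffunP => x; rewrite !ffunE; case: (x.2 < j)%N. Qed.

Lemma merge_same j e r t : merge j (merge j e r) t = merge j e t.
Proof. by apply/ffunP => x; rewrite !ffunE; case: (x.2 < j)%N. Qed.

Lemma merge_succ j e r t : merge j.+1 (merge j e r) t = merge j e (merge j.+1 r t).
Proof.
apply/ffunP => x; rewrite !ffunE; case: ifP => h1; case: ifP => h2 //.
by rewrite ltnS (ltnW h2) in h1.
Qed.

Lemma merge0 e r : merge 0 e r = r.
Proof. by apply/ffunP => x; rewrite !ffunE. Qed.

Lemma mergeN e r : merge N e r = e.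
Proof. by apply/ffunP => x; rewrite !ffunE ltn_ord. Qed.

Lemma resample j (F : Om -> R) :
  \sum_e \sum_r F (merge j e r) = #|{: Om}|%:R * \sum_e F e.
Proof.
pose phi := fun p : Om * Om => (merge j p.1 p.2, merge j p.2 p.1).
have phiK : cancel phi phi by case=> e r; rewrite /phi /= !merge_invol.
rewrite pair_big /= (reindex_inj (can_inj phiK)) /=.
rewrite (eq_bigr (fun p : Om * Om => F p.1)); last by case=> a b _ /=; rewrite merge_invol.
rewrite -(pair_big xpredT xpredT (fun a b => F a)) /= mulr_sumr.
by apply: eq_bigr => e _; rewrite sumr_const mulr_natl.
Qed.

Definition Cond j (f : Om -> R) (e : Om) : R := @Expect R N S (fun r => f (merge j e r)).

Lemma card_Om_gt0 : 0 < #|{: Om}|%:R :> R.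
Proof. by rewrite ltr0n; apply/card_gt0P; exists [ffun=> true]. Qed.

Lemma Expect_cst (a : R) : @Expect R N S (fun _ : Om => a) = a.
Proof.
rewrite /Expect sumr_const -[a *+ _]mulr_natr; exact: (mulfK (lt0r_neq0 card_Om_gt0)).
Qed.

Lemma sum_Cond j f : \sum_e Cond j f e = \sum_e f e.
Proof.
rewrite /Cond /Expect -mulr_suml resample mulrC mulKf //.
by rewrite gt_eqF // card_Om_gt0.
Qed.

Lemma azuma (f : Om -> R) (c l : R) : 0 < c ->
  (forall (e e' : Om) (n : nat), (forall x : 'I_S * 'I_N, (x.2 : nat) != n -> e x = e' x) ->
     f e - f e' <= c) ->
  \sum_e expR (l * (f e - @Expect R N S f)) <= #|{: Om}|%:R * expR (N%:R * (l ^+ 2 * c ^+ 2 / 8)).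
Proof.
move=> c0 BD.
set K := l ^+ 2 * c ^+ 2 / 8.
set n0 : R := #|{: Om}|%:R.
have n0p : 0 < n0 := card_Om_gt0.
have n0n : n0 != 0 by rewrite gt_eqF.
suff H : forall j, (j <= N)%N ->
    \sum_e expR (l * (Cond j f e - @Expect R N S f)) <= n0 * expR (j%:R * K).
  have CN e : Cond N f e = f e.
    rewrite /Cond (_ : (fun r => f (merge N e r)) = fun=> f e) ?Expect_cst //.
    by apply/funext => r; rewrite mergeN.
  rewrite (eq_bigr (fun e => expR (l * (Cond N f e - @Expect R N S f)))).
    exact: H.
  by move=> e _; rewrite CN.
elim=> [|j IH] hj.
  have -> : \sum_e expR (l * (Cond 0 f e - @Expect R N S f)) = \sum_(e : Om) 1.
    apply: eq_bigr => e _; rewrite /Cond.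
    have -> : (fun r => f (merge 0 e r)) = f by apply/funext => r; rewrite merge0.
    by rewrite subrr mulr0 expR0.
  by rewrite sumr_const mul0r expR0 mulr1.
have {}IH := IH (ltnW hj).
pose A e := expR (l * (Cond j f e - @Expect R N S f)).
pose B e := expR (l * (Cond j.+1 f e - Cond j f e)).
have CondS e r : Cond j f (merge j e r) = Cond j f e.
  by rewrite /Cond /Expect; congr (_ / _); apply: eq_bigr => t _; rewrite merge_same.
have E1 : \sum_e expR (l * (Cond j.+1 f e - @Expect R N S f)) = \sum_e A e * B e.
  by apply: eq_bigr => e _; rewrite /A /B -expRD; congr expR; ring.
have E2 : \sum_e A e * B e = (\sum_e (A e * \sum_r B (merge j e r))) / n0.
  have := resample j (fun e => A e * B e).
  under eq_bigr => e _ do under eq_bigr => r _ do rewrite /A CondS.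
  under eq_bigr => e _ do rewrite -mulr_sumr.
  by move=> ->; rewrite mulrC mulKf.
have HB e : \sum_r B (merge j e r) <= n0 * expR K.
  pose X r := Cond j.+1 f (merge j e r) - Cond j f e.
  have XB r : B (merge j e r) = expR (l * X r) by rewrite /B /X CondS.
  under eq_bigr => r _ do rewrite XB.
  have Xrange r r' : X r - X r' <= c.
    rewrite /X opprB addrA subrK /Cond /Expect -mulrBl -sumrB.
    rewrite ler_pdivrMr //; apply: (le_trans (y := \sum_(t : Om) c)); last first.
      by rewrite sumr_const -[c *+ _]mulr_natr.
    apply: ler_sum => t _; apply: (BD _ _ j) => x xj.
    rewrite !ffunE; case: ifP => // h1.
    by rewrite ltnS leq_eqVlt (negPf xj) /= in h1; rewrite h1.
  have Xsum : \sum_r X r = 0.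
    rewrite /X sumrB sumr_const; apply/eqP; rewrite subr_eq0; apply/eqP.
    rewrite /Cond /Expect -mulr_suml.
    under eq_bigr => r _ do under eq_bigr => t _ do rewrite merge_succ.
    rewrite (resample j.+1 (fun u => f (merge j e u))) mulrC mulKf //.
    rewrite -[_ *+ _]mulr_natr; symmetry; exact: (mulfVK n0n).
  case: (@arg_minP _ R _ e xpredT X erefl) => t0 _ Hmin.
  apply: (@hoeff_fin R _ X (X t0) c l c0) => // r.
  by rewrite Hmin //= -lerBlDl Xrange.
rewrite E1 E2 ler_pdivrMr //.
apply: (le_trans (y := \sum_e A e * (n0 * expR K))).
  apply: ler_sum => e _; apply: ler_wpM2l; first exact: expR_ge0.
  exact: HB.
rewrite -mulr_suml -[j.+1]addn1 natrD mulrDl mul1r expRD.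
rewrite [X in X <= _]mulrC [n0 * _]mulrC mulrA.
have IH' : \sum_i A i <= n0 * expR (j%:R * K) := IH.
have -> : n0 * expR (j%:R * K) * expR K * n0 = expR K * n0 * (n0 * expR (j%:R * K)) by ring.
by apply: ler_wpM2l => //; rewrite mulr_ge0 ?expR_ge0 ?ltW.
Qed.

Lemma markov (g : Om -> R) (th l : R) : 0 <= l ->
  #|[set e : Om | th <= g e]|%:R * expR (l * th) <= \sum_e expR (l * g e).
Proof.
move=> l0.
rewrite mulr_natl -sumr_const big_mkcond /=.
apply: ler_sum => e _; rewrite inE; case: ifP => h; last exact: expR_ge0.
by rewrite ler_expR ler_wpM2l.
Qed.

Lemma tail1 (f : Om -> R) (c th : R) : (0 < N)%N -> 0 < c -> 0 <= th ->
  (forall (e e' : Om) (n : nat), (forall x : 'I_S * 'I_N, (x.2 : nat) != n -> e x = e' x) ->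
     f e - f e' <= c) ->
  #|[set e : Om | th <= f e - @Expect R N S f]|%:R
    <= #|{: Om}|%:R * expR (- (2 * th ^+ 2 / (N%:R * c ^+ 2))).
Proof.
move=> N0 c0 th0 BD.
set l := 4 * th / (N%:R * c ^+ 2).
have Np : 0 < N%:R :> R by rewrite ltr0n.
have l0 : 0 <= l by rewrite /l divr_ge0 ?mulr_ge0 ?(ltW Np) ?(ltW c0).
have M := markov (fun e => f e - @Expect R N S f) th l l0.
have A := azuma f c l c0 BD.
have := le_trans M A.
have -> : - (2 * th ^+ 2 / (N%:R * c ^+ 2)) = N%:R * (l ^+ 2 * c ^+ 2 / 8) - l * th.
  by rewrite /l; field; rewrite !gt_eqF.
by move=> H; rewrite expRD expRN [X in _ <= X]mulrA ler_pdivlMr ?expR_gt0.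
Qed.

End Mcd.

Section PhiBD.
Variables N S k : nat.
Local Notation Om := (config N S).

Lemma ev_le1 (e : Om) s m : `|ev e s m| <= 1.
Proof.
rewrite /ev; case: insubP => [i _ _|_] //.
by case: (e (s, i)).
Qed.

Lemma ev_eq (e e' : Om) (n : nat) s m :
  (forall x : 'I_S * 'I_N, (x.2 : nat) != n -> e x = e' x) -> m != n ->
  ev e s m = ev e' s m.
Proof.
move=> H mn; rewrite /ev; case: insubP => [i _ iv|_] //.
by rewrite H //= iv.
Qed.

Lemma prod_le1 K (a : 'I_K -> int) : (forall i, `|a i| <= 1) -> `|\prod_i a i| <= 1.
Proof.
move=> Ha; rewrite normr_prod.
have : 0 <= \prod_i `|a i| <= 1.
  apply: (big_ind (fun x => 0 <= x <= 1)) => //.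
    by move=> x y /andP[x0 x1] /andP[y0 y1]; rewrite mulr_ge0 // mulr_ile1.
  by move=> i _; rewrite normr_ge0 Ha.
by case/andP.
Qed.

Lemma prod_diff K (a b : 'I_K -> int) : (forall i, `|a i| <= 1) -> (forall i, `|b i| <= 1) ->
  `|\prod_i a i - \prod_i b i| <= \sum_i `|a i - b i|.
Proof.
elim: K a b => [|K IH] a b Ha Hb; first by rewrite !big_ord0 subrr normr0.
rewrite !big_ord_recr /=.
set PA := \prod_(i < K) a (widen_ord _ i).
set PB := \prod_(i < K) b (widen_ord _ i).
have IH' := IH (fun i => a (widen_ord (leqnSn K) i)) (fun i => b (widen_ord (leqnSn K) i))
   (fun i => Ha _) (fun i => Hb _).
have PA1 : `|PA| <= 1 by apply: prod_le1 => i; exact: Ha.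
have -> : PA * a ord_max - PB * b ord_max =
   PA * (a ord_max - b ord_max) + (PA - PB) * b ord_max by ring.
apply: (le_trans (ler_normD _ _)); rewrite !normrM.
rewrite [X in X <= _]addrC; apply: lerD.
  by apply: (le_trans _ IH'); rewrite ler_piMr ?normr_ge0 ?Hb.
by rewrite ler_piMl ?normr_ge0.
Qed.

Lemma sum_shift (g : nat -> int) n d M : (forall m, 0 <= g m) ->
  (forall m, m != n -> g m = 0) ->
  \sum_(i < M) g (i + d)%N <= (if (d <= n < M + d)%N then g n else 0).
Proof.
move=> g0 gn; elim: M => [|M IH]; first by rewrite big_ord0; case: ifP.
rewrite big_ord_recr /=.
case: (eqVneq (M + d)%N n) => [Mn|Mn].
  subst n; move: IH; rewrite ltnn andbF => IH.
  have -> : (d <= M + d < M.+1 + d)%N by apply/andP; split; lia.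
  by rewrite -[X in _ <= X]add0r lerD.
rewrite gn // addr0; apply: (le_trans IH).
case: ifP => h1; case: ifP => h2 //.
by move: h1 h2; lia.
Qed.

Lemma corr_bd (e e' : Om) (n : nat) (M : 'I_N.+1) (d : {ffun 'I_k -> 'I_N}) (s : {ffun 'I_k -> 'I_S}) :
  (forall x : 'I_S * 'I_N, (x.2 : nat) != n -> e x = e' x) ->
  `|corr e M d s - corr e' M d s| <= (2 * k)%N%:R.
Proof.
move=> H; rewrite /corr -sumrB.
apply: (le_trans (ler_norm_sum _ _ _)).
apply: (le_trans (y := \sum_(i < M) \sum_(j < k)
    `|ev e (s j) (i + d j) - ev e' (s j) (i + d j)|)).
  by apply: ler_sum => i _; apply: prod_diff => j; apply: ev_le1.
rewrite exchange_big /=.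
apply: (le_trans (y := \sum_(j < k) 2%:R)); last by rewrite sumr_const card_ord -mulr_natl mulrnA.
apply: ler_sum => j _.
apply: (le_trans (sum_shift (fun m => `|ev e (s j) m - ev e' (s j) m|) n (d j) M _ _)).
- by move=> m; exact: normr_ge0.
- by move=> m mn /=; rewrite (@ev_eq e e' n (s j) m H mn) subrr normr0.
- case: ifP => _ //; apply: (le_trans (ler_normB _ _)).
  by rewrite -[2%:R]/(1 + 1) lerD ?ev_le1.
Qed.

Lemma Phi_bd (e e' : Om) (n : nat) :
  (forall x : 'I_S * 'I_N, (x.2 : nat) != n -> e x = e' x) ->
  (Phi k e <= Phi k e' + 2 * k)%N.
Proof.
move=> H; rewrite /Phi; apply/bigmax_leqP => p Pp.
have h1 : (`|corr e p.1.1 p.1.2 p.2| <= `|corr e' p.1.1 p.1.2 p.2| + 2 * k)%N.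
  rewrite -lez_nat PoszD !abszE.
  have T := ler_normD (corr e p.1.1 p.1.2 p.2 - corr e' p.1.1 p.1.2 p.2) (corr e' p.1.1 p.1.2 p.2).
  rewrite subrK in T; apply: (le_trans T); rewrite addrC lerD2l.
  have := @corr_bd e e' n p.1.1 p.1.2 p.2 H; by rewrite natz.
apply: (leq_trans h1); rewrite leq_add2r.
exact: (leq_bigmax_cond p Pp).
Qed.

End PhiBD.

Theorem lemma2 (R : realType) (N S k : nat) (hN : (0 < N)%N) (hS : (0 < S)%N)
  (hk : (0 < k)%N) (theta : R) (htheta : 0 <= theta) :
  Prob R (fun e : config N S =>
          theta <= `|(@Phi N S k e)%:R - @Expect R N S (fun e' => (@Phi N S k e')%:R : R)|)
  <= 2 * expR (- (theta ^+ 2 / (2 * k%:R ^+ 2 * N%:R))).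
Proof.
set f := fun e : config N S => (@Phi N S k e)%:R : R.
set c : R := (2 * k)%N%:R.
have c0 : 0 < c by rewrite ltr0n muln_gt0.
have BD : forall (e e' : config N S) (n : nat),
    (forall x : 'I_S * 'I_N, (x.2 : nat) != n -> e x = e' x) -> f e - f e' <= c.
  move=> e e' n H; rewrite /f /c lerBlDr -natrD ler_nat addnC.
  exact: (@Phi_bd N S k e e' n H).
have BDn : forall (e e' : config N S) (n : nat),
    (forall x : 'I_S * 'I_N, (x.2 : nat) != n -> e x = e' x) ->
    (fun e => - f e) e - (fun e => - f e) e' <= c.
  move=> e e' n H /=; rewrite opprK addrC; apply: (BD e' e n) => x xn.
  by rewrite H.
have T1 := @tail1 R N S f c theta hN c0 htheta BD.
have T2 := @tail1 R N S (fun e => - f e) c theta hN c0 htheta BDn.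
have EN : @Expect R N S (fun e => - f e) = - @Expect R N S f.
  by rewrite /Expect sumrN mulNr.
rewrite EN in T2.
have n0 := @card_Om_gt0 R N S.
have EE : 2 * theta ^+ 2 / (N%:R * c ^+ 2) = theta ^+ 2 / (2 * k%:R ^+ 2 * N%:R).
  rewrite /c natrM; field.
  by rewrite !gt_eqF ?ltr0n.
rewrite EE in T1 T2.
rewrite /Prob ler_pdivrMr //.
set A := [set e : config N S | theta <= f e - @Expect R N S f].
set B := [set e : config N S | theta <= - f e - - @Expect R N S f].
apply: (le_trans (y := (#|A| + #|B|)%:R)).
  rewrite ler_nat; apply: (leq_trans _ (leq_card_setU A B).1).
  apply: subset_leq_card. apply/fintype.subsetP => e; rewrite !inE ler_normr => /orP[h|h].
    by rewrite h.
  by apply/orP; right; rewrite opprK addrC -opprB.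
rewrite natrD; apply: (le_trans (lerD T1 T2)).
lra.
Qed.
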